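(* Let $H(x,p)=\frac12\left(H_{11}p^2+2H_{12}px+H_{22}x^2\right)$ with real coefficients satisfying $H_{11}H_{22}-H_{12}^2=-\alpha^2$, $\alpha>0$. For $t\in\mathbb R$ and $\tau=it$, let $\mathcal P_\tau=\exp(\tau\mathcal L_{X_H})\mathcal P_{Sch}$ be the complex line field on $\mathbb R^2$ spanned by $X_{w_\tau}$, where $$w_\tau=\exp(\tau X_H)(x)=\left(\cos(\alpha t)+iH_{12}\frac{\sin(\alpha t)}{\alpha}\right)x+iH_{11}\frac{\sin(\alpha t)}{\alpha}\,p .$$ Then $\mathcal P_\tau$ is: (a) anti-Kähler if $H_{11}\sin(2\alpha t)<0$; (b) the Schrödinger polarization if $H_{11}\sin(\alpha t)=0$; (c) Kähler if $H_{11}\sin(2\alpha t)>0$; (d) the real polarization $\langle X_{H_{12}x+H_{11}p}\rangle_{\mathbb C}$ if $H_{11}\cos(\alpha t)=0$.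
   Context: Work on $\mathbb R^2$ with coordinates $(x,p)$ and symplectic form $\omega=dx\wedge dp$. The Hamiltonian vector field of a function $f$ is $X_f=\frac{\partial f}{\partial p}\frac{\partial}{\partial x}-\frac{\partial f}{\partial x}\frac{\partial}{\partial p}$. For real $t$, $\exp(tX_H)(x)$ denotes the function $x\circ\phi_t$ where $\phi_t$ is the time-$t$ flow of $X_H$; $\exp(\tau X_H)(x)$ for $\tau=it$ is its analytic continuation in $t$, which gives the displayed formula for $w_\tau$. The Schrödinger (vertical) polarization is $\mathcal P_{Sch}=\langle X_x\rangle_{\mathbb C}=\langle\partial/\partial p\rangle_{\mathbb C}$, and $\mathcal P_\tau=\langle X_{w_\tau}\rangle_{\mathbb C}$. For a complex linear function $w$ on $\mathbb R^2$ write $\frac{i}{2}dw\wedge d\bar w=c\,\omega$; the polarization $\langle X_w\rangle_{\mathbb C}$ is called Kähler if $c>0$ (it is then $T^{(0,1)}$ of a complex structure $J$ for which $(\mathbb R^2,\omega,J)$ is Kähler, $w$ being $J$-holomorphic), anti-Kähler if $c<0$, and real if $c=0$. *)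

(* Defs.v *)
From Stdlib Require Import Reals.
From Coquelicot Require Import Coquelicot.
Open Scope R_scope.

Definition clin := (C * C)%type.
Definition clin_eval (w : clin) (x p : R) : C :=
  Cplus (Cmult (fst w) (RtoC x)) (Cmult (snd w) (RtoC p)).

(* Complex vector fields / 1-forms with constant coefficients on R^2:
   (u1, u2) means u1 d/dx + u2 d/dp  (resp. u1 dx + u2 dp). *)
Definition cvec := (C * C)%type.

Definition dform (w : clin) : cvec := (fst w, snd w).
Definition cconj_lin (w : clin) : clin := (Cconj (fst w), Cconj (snd w)).
(* Coefficient of dx /\ dp in (a1 dx + b1 dp) /\ (a2 dx + b2 dp). *)
Definition wedge (u v : cvec) : C :=
  Cminus (Cmult (fst u) (snd v)) (Cmult (snd u) (fst v)).

(* Hamiltonian vector field X_f = (df/dp) d/dx - (df/dx) d/dp, for w linear. *)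
Definition ham_vf (w : clin) : cvec := (snd w, Copp (fst w)).

Definition cspan (v : cvec) : cvec -> Prop :=
  fun u => exists l : C, u = (Cmult l (fst v), Cmult l (snd v)).
Definition polarization (w : clin) : cvec -> Prop := cspan (ham_vf w).

(* c with (i/2) dw /\ d(wbar) = c omega, omega = dx /\ dp. *)
Definition kahler_coef_is (w : clin) (c : R) : Prop :=
  Cmult (Cdiv Ci (RtoC 2)) (wedge (dform w) (dform (cconj_lin w))) = RtoC c.
Definition is_Kahler (w : clin) : Prop := exists c, kahler_coef_is w c /\ 0 < c.
Definition is_antiKahler (w : clin) : Prop := exists c, kahler_coef_is w c /\ c < 0.
Definition is_real_pol (w : clin) : Prop := exists c, kahler_coef_is w c /\ c = 0.

Definition x_fun : clin := (RtoC 1, RtoC 0).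
Definition P_Sch : cvec -> Prop := polarization x_fun.

Definition rlin (q r : R) : clin := (RtoC q, RtoC r).

Definition w_tau (H11 H12 alpha t : R) : clin :=
  ((cos (alpha * t) : R, H12 * sin (alpha * t) / alpha),
   ((0 : R), H11 * sin (alpha * t) / alpha)).

Definition Ham (H11 H12 H22 : R) (x p : R) : R :=
  / 2 * (H11 * p ^ 2 + 2 * H12 * p * x + H22 * x ^ 2).

(* Main.v *)
Require Import Defs.
From Stdlib Require Import Reals Lra FunctionalExtensionality PropExtensionality.
From Coquelicot Require Import Coquelicot.
Open Scope R_scope.

Lemma cspan_scale (k u1 u2 : C) : k <> RtoC 0 ->
  cspan (Cmult k u1, Cmult k u2) = cspan (u1, u2).
Proof.
  intros Hk. apply functional_extensionality; intro u.
  apply propositional_extensionality; unfold cspan; simpl; split.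
  - intros [l Hl]. exists (Cmult l k). rewrite Hl. f_equal; apply Cmult_assoc.
  - intros [l Hl]. exists (Cdiv l k). rewrite Hl.
    f_equal; unfold Cdiv; rewrite Cmult_assoc, <- (Cmult_assoc l), Cinv_l, Cmult_1_r; auto.
Qed.

Lemma coef (H11 H12 alpha t : R) : 0 < alpha ->
  kahler_coef_is (w_tau H11 H12 alpha t) (H11 * sin (2*alpha*t) / (2*alpha)).
Proof.
  intros Ha. unfold kahler_coef_is, w_tau, wedge, dform, cconj_lin; simpl.
  replace (2*alpha*t) with (2*(alpha*t)) by ring. rewrite sin_2a.
  apply injective_projections; simpl; field; lra.
Qed.

Theorem proposition3p1 (H11 H12 H22 alpha t : R) :
  0 < alpha ->
  H11 * H22 - H12 ^ 2 = - alpha ^ 2 ->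
  let w := w_tau H11 H12 alpha t in
  (H11 * sin (2 * alpha * t) < 0 -> is_antiKahler w) /\
  (H11 * sin (alpha * t) = 0 -> polarization w = P_Sch) /\
  (H11 * sin (2 * alpha * t) > 0 -> is_Kahler w) /\
  (H11 * cos (alpha * t) = 0 ->
     is_real_pol w /\ polarization w = polarization (rlin H12 H11)).
Proof.
  intros Ha Hd w.
  assert (Hc := coef H11 H12 alpha t Ha).
  assert (Hpos : 0 < 2 * alpha) by lra.
  assert (Hsc := sin2_cos2 (alpha * t)). unfold Rsqr in Hsc.
  set (s := sin (alpha * t)) in *. set (c := cos (alpha * t)) in *.
  assert (H12nz : H11 = 0 -> H12 <> 0).
  { intros -> ->. nra. }
  split; [|split; [|split]].
  - intros Hn. exists (H11 * sin (2*alpha*t) / (2*alpha)). split; auto.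
    unfold Rdiv. apply Rmult_neg_pos; auto. apply Rinv_0_lt_compat; lra.
  - intros H0. unfold polarization, P_Sch, w, w_tau, ham_vf, x_fun. simpl.
    fold s c.
    set (a := (c, H12 * s / alpha)).
    assert (Hanz : a <> RtoC 0).
    { intro E. unfold a in E. injection E as E1 E2.
      apply Rmult_integral in H0. destruct H0 as [H0|H0].
      - apply (H12nz H0). assert (s*s = 1) by nra.
        assert (H12 * s = 0).
        { apply (Rmult_eq_reg_r (/alpha)). lra. apply Rinv_neq_0_compat; lra. }
        nra.
      - rewrite H0 in Hsc. nra. }
    transitivity (cspan (Cmult a (RtoC 0), Cmult a (Copp (RtoC 1)))); [|exact (cspan_scale _ _ _ Hanz)].
    f_equal; unfold a; repeat (apply injective_projections; simpl).
    + ring.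
    + replace (H11 * s / alpha) with ((H11 * s) / alpha) by reflexivity.
      rewrite H0. field. lra.
    + ring.
    + ring.
  - intros Hn. exists (H11 * sin (2*alpha*t) / (2*alpha)). split; auto.
    unfold Rdiv. apply Rmult_lt_0_compat; auto. apply Rinv_0_lt_compat; lra.
  - intros H0. split.
    + exists (H11 * sin (2*alpha*t) / (2*alpha)). split; auto.
      replace (2*alpha*t) with (2*(alpha*t)) by ring. rewrite sin_2a. fold s c.
      replace (H11 * (2 * s * c)) with (2 * s * (H11 * c)) by ring.
      rewrite H0. field. lra.
    + unfold polarization, w, w_tau, ham_vf, rlin. simpl. fold s c.
      apply Rmult_integral in H0. destruct H0 as [H0|H0].
      * set (k := Cdiv (c, H12 * s / alpha) (RtoC H12)).
        assert (Hknz : k <> RtoC 0).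
        { intro E. unfold k, Cdiv in E.
          assert (E2 : (c, H12 * s / alpha) = RtoC 0).
          { rewrite <- (Cmult_1_r (c, _)), <- (Cinv_l (RtoC H12)).
            rewrite Cmult_assoc, E. apply Cmult_0_l.
            intro E'. injection E' as E'. now apply (H12nz H0). }
          injection E2 as E1 E3. assert (s*s = 1) by nra.
          assert (H12 * s = 0).
          { apply (Rmult_eq_reg_r (/alpha)). lra. apply Rinv_neq_0_compat; lra. }
          apply (H12nz H0). nra. }
        transitivity (cspan (Cmult k (RtoC H11), Cmult k (Copp (RtoC H12)))); [|exact (cspan_scale _ _ _ Hknz)].
        assert (H12nz' := H12nz H0).
        f_equal; repeat (apply injective_projections; simpl); unfold k, Cdiv; simpl; subst H11;
          field; split; auto; lra.
      * set (k := (0, s / alpha) : C).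
        assert (Hknz : k <> RtoC 0).
        { intro E. unfold k in E. injection E as E.
          assert (s = 0).
          { apply (Rmult_eq_reg_r (/alpha)). lra. apply Rinv_neq_0_compat; lra. }
          rewrite H0 in Hsc. nra. }
        transitivity (cspan (Cmult k (RtoC H11), Cmult k (Copp (RtoC H12)))); [|exact (cspan_scale _ _ _ Hknz)].
        f_equal; repeat (apply injective_projections; simpl); unfold k; simpl; rewrite ?H0;
          field; lra.
Qed.
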